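(* The Max-Util objective is subject to strict-improvement by a manipulator $m^-$ (one who can only hide existing edges) over undirected networks. That is, there exist a number $k$ of coalitions, an undirected social network $G=\langle A,E\rangle$, an agent $m\in A$ and a manipulation in which $m$ removes some of the edges of $G$ incident to $m$, producing the reported network $G^m$, such that \[\min_{P\in O(G^m)} u(m,P) \;>\; \max_{P\in O(G)} u(m,P),\] where $O(\cdot)$ denotes the set of Max-Util solutions and $u(m,P)$ is computed in the true network $G$.
   Context: Let $A=\{a_1,\dots,a_n\}$ be a finite nonempty set of agents and $G=\langle A,E\rangle$ a graph without self-loops (the social network). $N(a)$ is the set of neighbours of $a$ in $G$. For a coalition $C\subseteq A$ with $a\in C$, $u(a,C)=|C\cap N(a)|$. For $0<k\le n$, $\Pi_k$ is the set of partitions of $A$ into exactly $k$ nonempty coalitions; for $P\in\Pi_k$, $u(a,P)=u(a,C)$ where $C\in P$ contains $a$. The Max-Util objective: $O(G)$ is the set of $P\in\Pi_k$ maximizing $\sum_{a\in A}u(a,P)$ (utilities computed in $G$). A manipulator $m\in A$ of type $m^-$ in an undirected network may remove any subset of the edges incident to $m$; the resulting network is $G^m$. The utility $u(m,P)$ of the manipulator is always computed with respect to his true neighbours in the original $G$. *)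

(* Defs.v *)
From mathcomp Require Import all_boot.
Set Implicit Arguments. Unset Strict Implicit. Unset Printing Implicit Defensive.

Section SocialNetwork.
Variable T : finType.

Definition undirected_graph (e : rel T) : Prop := symmetric e /\ irreflexive e.

Definition nbhd (e : rel T) (a : T) : {set T} := [set b | e a b].

Definition util_coal (e : rel T) (a : T) (C : {set T}) : nat := #|C :&: nbhd e a|.

Definition util (e : rel T) (a : T) (P : {set {set T}}) : nat :=
  util_coal e a (pblock P a).

Definition Pi (k : nat) (P : {set {set T}}) : Prop :=
  partition P [set: T] /\ #|P| = k.

Definition welfare (e : rel T) (P : {set {set T}}) : nat := \sum_(a : T) util e a P.

Definition maxutil (e : rel T) (k : nat) (P : {set {set T}}) : Prop :=
  Pi k P /\ forall Q, Pi k Q -> welfare e Q <= welfare e P.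

Definition hides_edges (e e' : rel T) (m : T) : Prop :=
  symmetric e' /\ (forall x y, e' x y -> e x y) /\
  (forall x y, e x y -> ~~ e' x y -> (x == m) || (y == m)).

End SocialNetwork.

(* Main.v *)
Require Import Defs.
From mathcomp Require Import all_boot.
Set Implicit Arguments. Unset Strict Implicit. Unset Printing Implicit Defensive.
Section Gen.
Variable T : finType.

Lemma Pi_to_fun (k : nat) (P : {set {set T}}) (x0 : T) :
  Pi k P -> exists f : T -> 'I_k,
    (forall a b, (b \in pblock P a) = (f a == f b)) /\ (forall i, exists a, f a = i).
Proof.
case=> /and3P[/eqP covP triv P0] Hk.
have inC : forall x, x \in cover P by move=> x; rewrite covP inE.
have Hx0 : pblock P x0 \in P by apply: pblock_mem.
pose g a := enum_rank_in Hx0 (pblock P a).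
exists (fun a => cast_ord Hk (g a)); split.
  move=> a b.
  have -> : (cast_ord Hk (g a) == cast_ord Hk (g b)) = (g a == g b).
    by apply/eqP/eqP => [/(congr1 val) /= /val_inj|->].
  rewrite -eq_pblock //.
  apply/idP/idP => /eqP H; apply/eqP; first by rewrite /g H.
  move: H => /(congr1 enum_val).
  by rewrite /g !enum_rankK_in //; apply: pblock_mem.
move=> i.
pose j := cast_ord (esym Hk) i.
have Bj : enum_val j \in P by apply: enum_valP.
have : enum_val j != set0 by apply: contraNneq P0 => <-.
case/set0Pn => a Ha.
exists a.
have Pa : pblock P a = enum_val j by apply: def_pblock.
apply: val_inj => /=.
by rewrite /g Pa enum_valK_in.
Qed.

Definition PF (k : nat) (f : T -> 'I_k) : {set {set T}} :=
  [set [set x | f x == i] | i : 'I_k].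

Lemma PF_pblock k (f : T -> 'I_k) a :
  trivIset (PF f) -> pblock (PF f) a = [set x | f x == f a].
Proof.
move=> tr; apply: def_pblock => //.
  by apply/imsetP; exists (f a).
by rewrite inE.
Qed.

Lemma PF_Pi k (f : T -> 'I_k) : (forall i, exists a, f a = i) ->
  Pi k (PF f) /\ forall a b, (b \in pblock (PF f) a) = (f a == f b).
Proof.
move=> fs.
have tr : trivIset (PF f).
  apply/trivIsetP => A B /imsetP[i _ ->] /imsetP[j _ ->] neq.
  rewrite -setI_eq0; apply/eqP/setP => x; rewrite !inE.
  apply/negP => /andP[/eqP h1 /eqP h2]; move: neq; by rewrite -h1 -h2 eqxx.
have inj : injective (fun i : 'I_k => [set x | f x == i]).
  move=> i j /setP H; have [a fa] := fs i.
  by move: (H a); rewrite !inE fa eqxx => /esym /eqP.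
split; last by move=> a b; rewrite PF_pblock // inE eq_sym.
split; last by rewrite card_imset // card_ord.
apply/and3P; split => //.
  apply/eqP/setP => x; rewrite inE; apply/bigcupP.
  by exists [set y | f y == f x]; [apply/imsetP; exists (f x) | rewrite inE].
apply/imsetP => -[i _ /setP H]; have [a fa] := fs i.
by move: (H a); rewrite !inE fa eqxx.
Qed.

Lemma util_fun (e : rel T) (P : {set {set T}}) k (f : T -> 'I_k) m :
  (forall a b, (b \in pblock P a) = (f a == f b)) ->
  util e m P = \sum_b (e m b && (f m == f b)).
Proof.
move=> H; rewrite /util /util_coal -sum1_card big_mkcond /=.
by apply: eq_bigr => b _; rewrite !inE H andbC; case: (_ && _).
Qed.

End Gen.
Definition edges : seq (nat*nat) := [:: (0,1);(0,2);(0,3);(0,4);(0,5);(0,6);(1,2);(1,3);(1,6);(2,3);(3,5);(4,5);(4,6);(4,7);(5,6);(5,7);(6,7)].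
Definition hidden : seq (nat*nat) := [:: (0,4);(0,6)].
Definition mkadj (es : seq (nat*nat)) : seq (seq bool) :=
  [seq [seq ((a,b) \in es) || ((b,a) \in es) | b <- iota 0 8] | a <- iota 0 8].
Definition adjG := Eval vm_compute in mkadj edges.
Definition adjH := Eval vm_compute in mkadj [seq p <- edges | p \notin hidden].
Definition EN (adj : seq (seq bool)) (a b : nat) : bool := nth false (nth [::] adj a) b.
Fixpoint allseqs (n k : nat) : seq (seq nat) :=
  if n is n'.+1 then [seq i :: s | i <- iota 0 k, s <- allseqs n' k] else [:: [::]].
Definition wN adj (l : seq nat) := sumn [seq sumn [seq nat_of_bool (EN adj a b && (nth 0 l a == nth 0 l b)) | b <- iota 0 8] | a <- iota 0 8].
Definition uN adj (l : seq nat) := sumn [seq nat_of_bool (EN adj 0 b && (nth 0 l 0 == nth 0 l b)) | b <- iota 0 8].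
Definition surj (l : seq nat) := all (fun i => i \in l) (iota 0 4).
Lemma check1 : all (fun l => surj l ==> (16 <= wN adjH l) ==> (4 <= uN adjG l)) (allseqs 8 4).
Proof. vm_compute. reflexivity. Qed.
Lemma check2 : all (fun l => surj l ==> (18 <= wN adjG l) ==> (uN adjG l <= 3)) (allseqs 8 4).
Proof. vm_compute. reflexivity. Qed.

Definition eG : rel 'I_8 := fun a b => EN adjG a b.
Definition eH : rel 'I_8 := fun a b => EN adjH a b.
Definition lab (f : 'I_8 -> 'I_4) : seq nat := mkseq (fun i => val (f (inord i))) 8.

Lemma nth_lab f (b : 'I_8) : nth 0 (lab f) b = f b.
Proof. by rewrite nth_mkseq // inord_val. Qed.

Lemma sum_ordE n (F : nat -> nat) : \sum_(i < n) F i = sumn [seq F i | i <- iota 0 n].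
Proof. by rewrite -(big_mkord xpredT) /index_iota subn0 sumnE big_map. Qed.

Lemma bridge_u adj P (f : 'I_8 -> 'I_4) (a : 'I_8) :
  (forall a b, (b \in pblock P a) = (f a == f b)) ->
  util (fun a b : 'I_8 => EN adj a b) a P =
  sumn [seq nat_of_bool (EN adj a b && (nth 0 (lab f) a == nth 0 (lab f) b)) | b <- iota 0 8].
Proof.
move=> H; rewrite (util_fun _ _ H) -sum_ordE; apply: eq_bigr => b _.
by rewrite !nth_lab val_eqE.
Qed.

Lemma bridge_w adj P (f : 'I_8 -> 'I_4) :
  (forall a b, (b \in pblock P a) = (f a == f b)) ->
  welfare (fun a b : 'I_8 => EN adj a b) P = wN adj (lab f).
Proof.
move=> H; rewrite /welfare /wN -sum_ordE; apply: eq_bigr => a _.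
exact: bridge_u.
Qed.

Lemma lab_in f : lab f \in allseqs 8 4.
Proof.
have gen : forall n s, size s = n -> all (fun x => x < 4) s -> s \in allseqs n 4.
  elim=> [|n IH] [|x s] //= [hs] /andP[hx ha].
  have hm := map_f (cons x) (IH s hs ha).
  by rewrite !mem_cat; case: x hx hm => [|[|[|[|]]]] //= _ ->; rewrite ?orbT.
apply: gen; first by rewrite size_mkseq.
apply/allP => x; rewrite /lab /mkseq => /mapP[i _ ->]; exact: ltn_ord.
Qed.

Lemma lab_surj (f : 'I_8 -> 'I_4) : (forall i, exists a, f a = i) -> surj (lab f).
Proof.
move=> fs; apply/allP => i; rewrite mem_iota /= => hi.
have [a fa] := fs (Ordinal hi).
have -> : i = nth 0 (lab f) a by rewrite nth_lab fa.
by apply: mem_nth; rewrite size_mkseq.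
Qed.

Lemma iota_ord n (a : 'I_n) : val a \in iota 0 n.
Proof. by rewrite mem_iota leq0n add0n ltn_ord. Qed.

Lemma all2P (p : nat -> nat -> bool) :
  all (fun a => all (fun b => p a b) (iota 0 8)) (iota 0 8) ->
  forall a b : 'I_8, p a b.
Proof.
move=> /allP H a b; have /allP := H a (iota_ord a).
by apply; apply: iota_ord.
Qed.

Definition lstarG : seq nat := [:: 0;1;2;3;0;0;0;0].
Definition lstarH : seq nat := [:: 0;0;0;0;1;0;2;3].
Definition fstar (l : seq nat) (i : 'I_8) : 'I_4 := inord (nth 0 l i).

Lemma fstar_surj l : all (fun j => (index j l < 8) && (nth 0 l (index j l) == j)) (iota 0 4) ->
  forall i, exists a, fstar l a = i.
Proof.
move=> /allP H i; have /andP[h1 /eqP h2] := H i (iota_ord i).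
exists (Ordinal h1); apply: val_inj => /=.
by rewrite /fstar /= h2 inordK.
Qed.

Lemma lab_fstar l : size l == 8 -> all (fun x => x < 4) l -> lab (fstar l) = l.
Proof.
move=> /eqP hs /allP ha; apply: (@eq_from_nth _ 0); first by rewrite size_mkseq hs.
move=> i; rewrite size_mkseq => hi.
rewrite nth_mkseq // /fstar /= (inordK hi) inordK //.
by apply: ha; apply: mem_nth; rewrite hs.
Qed.

Lemma opt_bound adj l k0 P : 
  all (fun j => (index j l < 8) && (nth 0 l (index j l) == j)) (iota 0 4) ->
  (size l == 8) && all (fun x => x < 4) l && (wN adj l == k0) ->
  maxutil (fun a b : 'I_8 => EN adj a b) 4 P -> k0 <= welfare (fun a b : 'I_8 => EN adj a b) P.
Proof.
move=> hl /andP[/andP[h1 h2] /eqP hw] [_ mx].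
rewrite -(lab_fstar h1 h2) in hw.
have [hpi hb] := PF_Pi (fstar_surj hl).
by rewrite -hw -(bridge_w _ hb); apply: mx.
Qed.

Theorem proposition1 :
  exists (n k : nat) (e e' : rel 'I_n) (m : 'I_n),
    0 < n /\ 0 < k <= n /\
    undirected_graph e /\ hides_edges e e' m /\
    (forall P Q : {set {set 'I_n}},
        maxutil e' k P -> maxutil e k Q -> util e m Q < util e m P).
Proof.
exists 8, 4, eG, eH, ord0.
split => //; split => //.
split.
  split.
    move=> a b; apply/eqP.
    have := all2P (p := fun a b => EN adjG a b == EN adjG b a) (ltac:(by vm_compute)) a b.
    by [].
  move=> a; apply/negP.
  have := all2P (p := fun a b => (a == b) ==> ~~ EN adjG a b) (ltac:(by vm_compute)) a a.
  by rewrite eqxx /= => /negP.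
split.
  split.
    move=> a b; apply/eqP.
    have := all2P (p := fun a b => EN adjH a b == EN adjH b a) (ltac:(by vm_compute)) a b.
    by [].
  split.
    move=> a b; apply/implyP.
    have := all2P (p := fun a b => EN adjH a b ==> EN adjG a b) (ltac:(by vm_compute)) a b.
    by [].
  move=> a b h1 h2.
  have := all2P (p := fun a b => EN adjG a b ==> ~~ EN adjH a b ==> (a == 0) || (b == 0)) (ltac:(by vm_compute)) a b.
  by move=> /implyP /(_ h1) /implyP /(_ h2).
move=> P Q hP hQ.
have wP := opt_bound (adj := adjH) (l := lstarH) (k0 := 16) (P := P) (ltac:(by vm_compute)) (ltac:(by vm_compute)) hP.
have wQ := opt_bound (adj := adjG) (l := lstarG) (k0 := 18) (P := Q) (ltac:(by vm_compute)) (ltac:(by vm_compute)) hQ.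
have [f [hf fs]] := Pi_to_fun ord0 hP.1.
have [g [hg gs]] := Pi_to_fun ord0 hQ.1.
rewrite (bridge_w _ hf) in wP; rewrite (bridge_w _ hg) in wQ.
have c1 := implyP (implyP (allP check1 _ (lab_in f)) (lab_surj fs)) wP.
have c2 := implyP (implyP (allP check2 _ (lab_in g)) (lab_surj gs)) wQ.
rewrite /eG (bridge_u _ _ hf) (bridge_u _ _ hg).
exact: leq_ltn_trans c2 c1.
Qed.
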